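(* Let $k$ be an infinite field of characteristic $p>0$. Then for every positive integer $n$, $R_n^{(p)}\subseteq L_n$.
   Context: $X=\{x_1,x_2,\ldots\}$ is a countably infinite set and $k_0\langle X\rangle$ is the free associative $k$-algebra (without identity) on $X$. A $T$-space is a $k$-linear subspace closed under every algebra endomorphism of $k_0\langle X\rangle$; the $T$-space generated by a subset is the smallest $T$-space containing it. $S_p(v_1,\ldots,v_p)=\sum_{\sigma\in\Sigma_p}\prod_{i=1}^p v_{\sigma(i)}$. $R_1^{(p)}$ is the $T$-space generated by $S_p(x_1,\ldots,x_p)$, and $R_{n+1}^{(p)}$ is the $T$-space generated by $R_n^{(p)}$ together with all products $u\,S_p(v_1,\ldots,v_p)$, $u\in R_n^{(p)}$, $v_i\in k_0\langle X\rangle$. $L_1$ is the $T$-space generated by $x_1^p$, and $L_{n+1}$ is the $T$-space generated by $L_n$ together with all products $u\,v^p$, $u\in L_n$, $v\in k_0\langle X\rangle$. *)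

(* Defs.v *)
From HB Require Import structures.
From mathcomp Require Import all_boot all_order all_algebra all_fingroup.
Set Implicit Arguments. Unset Strict Implicit. Unset Printing Implicit Defensive.
Import GRing.Theory.
Local Open Scope ring_scope.

(* The free associative algebra k<X> on X = {x_0, x_1, ...} (indexed by nat),
   realised as coefficient functions on words (seq nat); k_0<X> (no identity)
   is the subset [inA] of finitely supported functions vanishing on the empty
   word. *)
Section FreeAlg.
Variable k : fieldType.

Definition ncp := seq nat -> k.

Definition inA (f : ncp) : Prop :=
  f [::] = 0 /\ exists s : seq (seq nat), forall w, f w != 0 -> w \in s.

Definition pzero : ncp := fun _ => 0.
Definition pone : ncp := fun w => (w == [::])%:R.
Definition padd (f g : ncp) : ncp := fun w => f w + g w.
Definition pscale (c : k) (f : ncp) : ncp := fun w => c * f w.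
Definition pmul (f g : ncp) : ncp :=
  fun w => \sum_(0 <= i < (size w).+1) f (take i w) * g (drop i w).
Definition pvar (i : nat) : ncp := fun w => (w == [:: i])%:R.
Definition pprod (vs : seq ncp) : ncp := foldr pmul pone vs.
Definition ppow (v : ncp) (m : nat) : ncp := pprod (nseq m v).

Definition Sp (p : nat) (v : 'I_p -> ncp) : ncp :=
  fun w => \sum_(s : 'S_p) pprod [seq v (s i) | i <- enum 'I_p] w.

Definition pset := ncp -> Prop.

Definition is_subspace (V : pset) : Prop :=
  (forall f, V f -> inA f) /\ V pzero /\
  (forall f g, V f -> V g -> V (padd f g)) /\
  (forall c f, V f -> V (pscale c f)).

Definition is_endo (phi : ncp -> ncp) : Prop :=
  (forall f, inA f -> inA (phi f)) /\
  (forall f g, inA f -> inA g -> phi (padd f g) = padd (phi f) (phi g)) /\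
  (forall c f, inA f -> phi (pscale c f) = pscale c (phi f)) /\
  (forall f g, inA f -> inA g -> phi (pmul f g) = pmul (phi f) (phi g)).

Definition is_Tspace (V : pset) : Prop :=
  is_subspace V /\ forall phi, is_endo phi -> forall f, V f -> V (phi f).

Definition Tgen (S : pset) : pset :=
  fun f => forall V, is_Tspace V -> (forall g, S g -> V g) -> V f.

Fixpoint Rsh (p : nat) (m : nat) : pset :=
  match m with
  | 0 => Tgen (fun f => f = Sp (fun i : 'I_p => pvar i))
  | m'.+1 => Tgen (fun f => Rsh p m' f \/
        exists u (v : 'I_p -> ncp), Rsh p m' u /\ (forall i, inA (v i)) /\
                                    f = pmul u (Sp v))
  end.
Definition Rp (p n : nat) : pset := Rsh p n.-1.

Fixpoint Lsh (p : nat) (m : nat) : pset :=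
  match m with
  | 0 => Tgen (fun f => f = ppow (pvar 0) p)
  | m'.+1 => Tgen (fun f => Lsh p m' f \/
        exists u v, Lsh p m' u /\ inA v /\ f = pmul u (ppow v p))
  end.
Definition Lp (p n : nat) : pset := Lsh p n.-1.

End FreeAlg.

(* Main.v *)
From HB Require Import structures.
Require Import Defs.
From mathcomp Require Import all_boot all_order all_algebra all_fingroup.
From mathcomp Require Import boolp.
Set Implicit Arguments. Unset Strict Implicit. Unset Printing Implicit Defensive.
Import GRing.Theory.
Local Open Scope ring_scope.

Section Alg.
Variable k : fieldType.
Local Notation ncp := (ncp k).

Lemma pmul_nil (f g : ncp) : pmul f g [::] = f [::] * g [::].
Proof. by rewrite /pmul big_nat1. Qed.

Lemma pmul_cons (f g : ncp) b w :
  pmul f g (b :: w) = f [::] * g (b :: w) + pmul (fun u => f (b :: u)) g w.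
Proof. by rewrite /pmul /= big_nat_recl. Qed.

Lemma pmulDl (f1 f2 g : ncp) : pmul (padd f1 f2) g = padd (pmul f1 g) (pmul f2 g).
Proof.
apply: funext => w; rewrite /pmul /padd -big_split /=.
by apply: eq_bigr => i _; rewrite mulrDl.
Qed.

Lemma pmulDr (f g1 g2 : ncp) : pmul f (padd g1 g2) = padd (pmul f g1) (pmul f g2).
Proof.
apply: funext => w; rewrite /pmul /padd -big_split /=.
by apply: eq_bigr => i _; rewrite mulrDr.
Qed.

Lemma pmulA : associative (@pmul k).
Proof.
move=> f g h; apply: funext => w; elim: w f => [|b w IH] f.
  by rewrite !pmul_nil mulrA.
rewrite !pmul_cons pmul_nil IH.
have -> : (fun u => pmul f g (b :: u)) =
   padd (fun u => f [::] * g (b :: u)) (pmul (fun u => f (b :: u)) g).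
  by apply: funext => u; rewrite pmul_cons.
rewrite pmulDl /padd mulrDr addrA -mulrA; congr (_ + _ + _).
rewrite /pmul mulr_sumr; apply: eq_bigr => i _; by rewrite mulrA.
Qed.

Lemma pmul1r : left_id (@pone k) (@pmul k).
Proof.
move=> f; apply: funext => w; rewrite /pmul big_nat_recl //= take0 drop0 mul1r.
case: w => [|b w]; first by rewrite big_geq ?addr0.
by rewrite big1 ?addr0 // => i _; rewrite /pone /= mul0r.
Qed.

Lemma pmulr1 : right_id (@pone k) (@pmul k).
Proof.
move=> f; apply: funext => w; rewrite /pmul big_nat_recr //= take_size drop_size mulr1.
rewrite big1_seq ?add0r // => i; rewrite mem_index_iota => /andP[_ lt].
rewrite /pone; case: eqP => [/(congr1 size)|]; rewrite ?mulr0 // size_drop /=.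
by move=> /eqP; rewrite subn_eq0 leqNgt; case/andP: lt => _ ->.
Qed.

End Alg.

Definition R (k : fieldType) := ncp k.
HB.instance Definition _ (k : fieldType) := gen_eqMixin (R k).
HB.instance Definition _ (k : fieldType) := gen_choiceMixin (R k).

Lemma paddA (k : fieldType) : associative (@padd k).
Proof. by move=> f g h; apply: funext => w; rewrite /padd addrA. Qed.
Lemma paddC (k : fieldType) : commutative (@padd k).
Proof. by move=> f g; apply: funext => w; rewrite /padd addrC. Qed.
Lemma padd0 (k : fieldType) : left_id (@pzero k) (@padd k).
Proof. by move=> f; apply: funext => w; rewrite /padd /pzero add0r. Qed.
Definition popp (k : fieldType) (f : ncp k) : ncp k := fun w => - f w.
Lemma paddN (k : fieldType) : left_inverse (@pzero k) (@popp k) (@padd k).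
Proof. by move=> f; apply: funext => w; rewrite /padd /pzero /popp addNr. Qed.

HB.instance Definition _ (k : fieldType) :=
  GRing.isZmodule.Build (R k) (@paddA k) (@paddC k) (@padd0 k) (@paddN k).

Lemma pone_neq0 (k : fieldType) : (@pone k : R k) != 0.
Proof.
apply/eqP => /(congr1 (fun f : R k => f [::])); rewrite /pone /=.
by move/eqP; rewrite oner_eq0.
Qed.

HB.instance Definition _ (k : fieldType) :=
  GRing.Zmodule_isNzRing.Build (R k) (@pmulA k) (@pmul1r k) (@pmulr1 k)
    (@pmulDl k) (@pmulDr k) (@pone_neq0 k).

Lemma signsum (T : nzRingType) (I : finType) (B : {set I}) :
  \sum_(A : {set I} | B \subset A) (-1) ^+ (#|I| - #|A|) = (B == setT)%:R :> T.
Proof.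
have [->|nB] := eqP.
  rewrite (big_pred1 setT) => [|A]; last by rewrite subTset.
  by rewrite cardsT subnn expr0.
have [i0 Hi0] : exists i0, i0 \notin B.
  case: (pickP [pred x | x \notin B]) => [i0 /= Hi0|H]; first by exists i0.
  by exfalso; apply: nB; apply/setP=> x; rewrite inE; move: (H x) => /= /negbFE.
rewrite (bigID (fun A : {set I} => i0 \in A)) /=.
pose h (A : {set I}) := if i0 \in A then A :\ i0 else i0 |: A.
have hK : involutive h.
  move=> A; rewrite /h; case iA: (i0 \in A).
    by rewrite !inE eqxx /= setD1K.
  by rewrite setU11 setU1K ?iA.
rewrite (reindex_inj (inv_inj hK)) /=.
rewrite [X in X + _](_ : _ = \sum_(A : {set I} | (B \subset A) && (i0 \notin A))
     - (-1) ^+ (#|I| - #|A|)) ?sumrN ?addNr //.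
rewrite -sumrN; apply: eq_big => A.
  rewrite /h; case iA: (i0 \in A) => /=; first by rewrite setD11 !andbF.
  rewrite setU11 !andbT; apply/idP/idP => /subsetP H; apply/subsetP => x xB.
    by have := H x xB; rewrite !inE; case: eqP xB => [->|//]; rewrite (negbTE Hi0).
  by rewrite !inE H ?orbT.
move=> /andP[_]; rewrite /h; case iA: (i0 \in A); first by rewrite setD11.
move=> _; rewrite cardsU1 iA add1n.
have ltA : (#|A| < #|I|)%N.
  rewrite -(cardsC A) -[X in (X < _)%N]addn0 ltn_add2l card_gt0.
  by apply/set0Pn; exists i0; rewrite inE iA.
by rewrite -[(#|I| - #|A|)%N](subnSK ltA) exprS mulN1r opprK.
Qed.

Lemma polar (T : nzRingType) p (v : 'I_p -> T) :
  \sum_(s : 'S_p) \prod_(i < p) v (s i) =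
  \sum_(A : {set 'I_p}) (-1) ^+ (p - #|A|) * (\sum_(i in A) v i) ^+ p.
Proof.
pose F := {ffun 'I_p -> 'I_p}.
pose P (f : F) := \prod_(j < p) v (f j).
symmetry.
transitivity (\sum_(A : {set 'I_p}) \sum_(f : F)
   (if f \in ffun_on (mem A) then (-1) ^+ (p - #|A|) * P f else 0)).
  apply: eq_bigr => A _; rewrite -big_mkcond /= -big_distrr /=; congr (_ * _).
  rewrite -(bigA_distr_big _ (fun (_ : 'I_p) i => v i)) /=.
  by rewrite -(big_mkord xpredT (fun _ => \sum_(i in A) v i)) prodr_const_nat subn0.
rewrite exchange_big /=.
transitivity (\sum_(f : F) ((f @: [set: 'I_p]) == setT)%:R * P f).
  apply: eq_bigr => f _; rewrite -big_mkcondr /= -big_distrl /=; congr (_ * _).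
  rewrite -(signsum _ (f @: [set: 'I_p])) card_ord; apply: eq_bigl => A.
  apply/ffun_onP/subsetP => [H y /imsetP[x _ ->]|H x]; first exact: H.
  by apply: H; apply/imsetP; exists x.
have E (f : F) : (f @: [set: 'I_p] == setT) = injectiveb f.
  apply/idP/injectiveP.
    move/eqP => Hf; have : #|f @: [set: 'I_p]| == #|[set: 'I_p]| by rewrite Hf.
    by move/imset_injP => H x y Hxy; apply: H; rewrite ?inE.
  by move=> inj; rewrite eqEcard subsetT /= card_imset.
under eq_bigr => f _ do rewrite E.
rewrite (bigID (fun f : F => injectiveb f)) /= addrC big1 ?add0r => [|f /negbTE ->]; last by rewrite mul0r.
under eq_bigr => f -> do rewrite mul1r.
rewrite (reindex (@pval _)) /=; last first.
  pose in_Sn := insubd (1%g : 'S_p).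
  by exists in_Sn => /= f Uf; first apply: val_inj; apply: insubdK.
apply: eq_big => /= [s | s _]; rewrite ?(valP s) //.
by rewrite /P; apply: eq_bigr => i _; rewrite pvalE.
Qed.

Section Main.
Variable k : fieldType.
Local Notation ncp := (ncp k).
Local Notation RR := (R k).

Lemma eval_sum I (r : seq I) (P : pred I) (F : I -> RR) w :
  (\sum_(i <- r | P i) F i) w = \sum_(i <- r | P i) F i w.
Proof. by apply: (big_morph (fun f : RR => f w)). Qed.

Lemma pprod_prod (vs : seq ncp) : Defs.pprod vs = \big[*%R/1%R]_(x <- vs) (x : RR).
Proof. by elim: vs => [|v vs IH]; rewrite ?big_nil ?big_cons //= IH. Qed.

Lemma ppow_exp (v : ncp) m : ppow v m = (v : RR) ^+ m.
Proof. by elim: m => [|m IH]; rewrite ?expr0 // exprS -IH. Qed.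

Lemma Sp_ring p (v : 'I_p -> ncp) :
  Sp v = (\sum_(s : 'S_p) \prod_(i < p) (v (s i) : RR))%R.
Proof.
apply: funext => w; rewrite /Sp eval_sum; apply: eq_bigr => s _.
by rewrite pprod_prod big_map enumT unlock.
Qed.

(* the substitution endomorphism x_0 -> sum of x_i, i in S; x_j -> 0 else *)
Definition inS (S : seq nat) : pred nat := fun a => a \in S.
Definition phi (S : seq nat) (f : ncp) : ncp :=
  fun w => if all (inS S) w then f (nseq (size w) 0%N) else 0.

Fixpoint words (S : seq nat) (n : nat) : seq (seq nat) :=
  if n is n'.+1 then [seq a :: r | a <- S, r <- words S n'] else [:: [::]].

Lemma mem_words S w : all (inS S) w -> w \in words S (size w).
Proof.
elim: w => [|a w IH] //= /andP[aS /IH wW].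
exact: (allpairs_f (fun a r => a :: r)).
Qed.

Lemma inA_phi S f : inA f -> inA (phi S f).
Proof.
move=> [f0 [s Hs]]; split; first by rewrite /phi /=.
exists (flatten [seq words S (size u) | u <- s]) => w; rewrite /phi.
case: ifP => [Hw|_]; last by rewrite eqxx.
move=> /Hs Hn; apply/flatten_mapP; exists (nseq (size w) 0%N) => //.
by rewrite size_nseq; exact: mem_words.
Qed.

Lemma phi_add S f g : phi S (padd f g) = padd (phi S f) (phi S g).
Proof. by apply: funext => w; rewrite /phi /padd; case: ifP; rewrite ?addr0. Qed.

Lemma phi_scale S c f : phi S (pscale c f) = pscale c (phi S f).
Proof. by apply: funext => w; rewrite /phi /pscale; case: ifP; rewrite ?mulr0. Qed.

Lemma phi_mul S f g : phi S (pmul f g) = pmul (phi S f) (phi S g).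
Proof.
apply: funext => w; rewrite /phi /pmul size_nseq.
case Hw: (all (inS S) w).
  apply: eq_big_nat => i /andP[_ Hi].
  rewrite -(cat_take_drop i w) all_cat in Hw; case/andP: Hw => H1 H2.
  rewrite H1 H2.
  by rewrite size_takel // size_drop take_nseq // drop_nseq.
rewrite big1 // => i _.
rewrite -(cat_take_drop i w) all_cat in Hw; move: Hw.
by case: (all (inS S) (take i w)); case: (all (inS S) (drop i w)); rewrite ?mulr0 ?mul0r.
Qed.

Lemma phi_one S : phi S (@pone k) = @pone k.
Proof.
apply: funext => w; rewrite /phi /pone; case: w => [|a w] //=.
by case: ifP.
Qed.

Lemma phi_pow S f m : phi S (ppow f m) = ppow (phi S f) m.
Proof.
elim: m => [|m IH]; first exact: phi_one.
by rewrite (_ : ppow f m.+1 = pmul f (ppow f m)) // phi_mul IH.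
Qed.

Lemma phi_endo S : is_endo (phi S).
Proof.
split; first exact: inA_phi.
split; first by move=> f g _ _; exact: phi_add.
split; first by move=> c f _; exact: phi_scale.
by move=> f g _ _; exact: phi_mul.
Qed.

Lemma phi_var0 p (A : {set 'I_p}) :
  phi [seq val i | i <- enum A] (pvar k 0%N) = \sum_(i in A) (pvar k i : RR).
Proof.
apply: funext => w; rewrite eval_sum /phi /pvar.
case: w => [|a [|b w]] /=.
- by rewrite big1 // => i _.
- rewrite andbT; case: (boolP (inS [seq val i | i <- enum A] a)) => aS.
    case/mapP: aS => j; rewrite mem_enum => jA ->.
    rewrite (bigD1 j) //= eqxx big1 ?addr0 // => i /andP[_ ij].
    by case: eqP => // [[/val_inj E]]; rewrite E eqxx in ij.
  rewrite big1 // => i iA; case: eqP => // [[E]].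
  by move: aS; rewrite E; case/negP; apply/mapP; exists i; rewrite ?mem_enum.
- by rewrite if_same big1 // => i _; rewrite eqseq_cons andbC.
Qed.

Section Closure.
Variable V : pset k.
Hypothesis hV : is_Tspace V.

Lemma V0 : V (0 : RR).
Proof. by case: hV => [[_ [H _]] _]. Qed.

Lemma VD (f g : RR) : V f -> V g -> V (f + g).
Proof. by case: hV => [[_ [_ [H _]]] _]; apply: H. Qed.

Lemma VN (f : RR) : V f -> V (- f).
Proof.
case: hV => [[_ [_ [_ H]]] _] Hf.
have -> : - f = pscale (-1) f by apply: funext => w; rewrite /pscale mulN1r.
exact: H.
Qed.

Lemma Vsign n (f : RR) : V f -> V ((-1) ^+ n * f).
Proof.
move=> Hf; elim: n => [|n IH]; first by rewrite expr0 mul1r.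
by rewrite exprS -mulrA mulN1r; apply: VN.
Qed.

Lemma Vsum I (r : seq I) (P : pred I) (F : I -> RR) :
  (forall i, P i -> V (F i)) -> V (\sum_(i <- r | P i) F i).
Proof. by move=> H; apply: big_ind => //; [exact: V0 | exact: VD]. Qed.

End Closure.

Lemma inA0 : inA (0 : RR).
Proof. by split => //; exists [::] => w; rewrite eqxx. Qed.

Lemma inAD (f g : RR) : inA f -> inA g -> inA (f + g).
Proof.
move=> [f0 [s Hs]] [g0 [t Ht]]; split.
  by rewrite -[(f + g) [::]]/(f [::] + g [::]) f0 g0 addr0.
exists (s ++ t) => w; rewrite -[(f + g) w]/(f w + g w) mem_cat.
case: (boolP (f w != 0)) => [/Hs -> //| /negPn/eqP ->]; rewrite add0r.
by move/Ht ->; rewrite orbT.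
Qed.

Lemma inA_sum I (r : seq I) (P : pred I) (F : I -> RR) :
  (forall i, P i -> inA (F i)) -> inA (\sum_(i <- r | P i) F i).
Proof. by move=> H; apply: big_ind => //; [exact: inA0 | exact: inAD]. Qed.

Lemma key p m (f : ncp) : Rsh p m f -> Lsh p m f.
Proof.
elim: m f => [|m IH] f /= Hf V hV HG; apply: (Hf V hV) => g.
  move=> ->; rewrite Sp_ring (polar (fun i : 'I_p => (pvar k i : RR))); apply: (Vsum hV) => A _; apply: (Vsign hV).
  have := hV.2 _ (phi_endo [seq val i | i <- enum A]) _ (HG _ erefl).
  by rewrite phi_pow phi_var0 ppow_exp.
case=> [/IH Hg | [u [v [/IH Hu [Hv ->]]]]]; first by apply: HG; left.
rewrite Sp_ring polar.
have -> : pmul u (\sum_(A : {set 'I_p}) (-1) ^+ (p - #|A|) *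
     (\sum_(i in A) (v i : RR)) ^+ p) =
   \sum_(A : {set 'I_p}) (-1) ^+ (p - #|A|) *
     ((u : RR) * (\sum_(i in A) (v i : RR)) ^+ p).
  rewrite -[LHS]/((u : RR) * _) big_distrr /=; apply: eq_bigr => A _.
  by rewrite mulrA (commr_sign (u : RR)) -mulrA.
apply: (Vsum hV) => A _; apply: (Vsign hV). apply: HG; right.
exists u, (\sum_(i in A) (v i : RR)); split => //; split.
  by apply: inA_sum => i _.
by rewrite ppow_exp.
Qed.

End Main.

Local Close Scope ring_scope.

Theorem corollary3p1 (k : fieldType) (p : nat) :
  p \in [pchar k]%R ->
  (forall s : seq k, exists x : k, x \notin s) ->
  forall n : nat, 0 < n -> forall f : ncp k, Rp p n f -> Lp p n f.
Proof. by move=> _ _ n _ f; apply: key. Qed.
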